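(* Assume the CFL condition $0\le \lambda \sup_{w\ge 1} W'(w)\le 1$, and let $(y_{0,i})_{i\in\mathbb Z}$ be a bounded sequence with $y_{0,i}\ge1$ and $|y_{0}|_{BV}:=\sum_{i\in\mathbb Z}|y_{0,i+1}-y_{0,i}|<\infty$. Let $(w^n_i)$ be the solution of the scheme. Then for all $n\ge0$ and $i\in\mathbb Z$: $$1\le \inf_j y_{0,j}\le w^n_i\le \sup_j y_{0,j},\qquad \sum_{i}|w^n_{i+1}-w^n_i|\le \sum_i|y_{0,i+1}-y_{0,i}|,$$ $$\Delta z\sum_i|w^{n+1}_i-w^n_i|\le \Delta t\,\|W'\|_{\infty}\,|y_0|_{BV},$$ where $\|W'\|_\infty=\sup_{w\ge1}|W'(w)|$.
   Context: Kernel: $\Phi:[0,\infty)\to[0,\infty)$ is non-increasing with $\int_0^\infty\Phi(z)\,dz=1$ and $\int_0^\infty z\Phi(z)\,dz<\infty$; for $\alpha>0$, $\Phi_\alpha(z)=\alpha^{-1}\Phi(z/\alpha)$. Flux: $V\in C^1([0,\infty))$ is non-increasing and $W:[1,\infty)\to\mathbb R$, $W(w)=V(1/w)$. Discretization: $\Delta z>0$, $\Delta t>0$, $\lambda=\Delta t/\Delta z$, $z_j=(j-\tfrac12)\Delta z$ for $j\in\tfrac12\mathbb Z$, and for integers $j\ge i$, $\Phi_{ij\alpha}=\int_{z_{j-1/2}}^{z_{j+1/2}}\Phi_\alpha(\zeta-z_{i-1/2})\,d\zeta$. The scheme: $w^0_i=\sum_{j\ge i}\Phi_{ij\alpha}y_{0,j}$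 and $w^{n+1}_i=w^n_i+\lambda(\overline W^{\,n}_{i+1/2}-\overline W^{\,n}_{i-1/2})$ for $n\ge0$, where $\overline W^{\,n}_{i-1/2}=\sum_{j\ge i}\Phi_{ij\alpha}W(w^n_j)$. *)

(* Defs.v *)
From Stdlib Require Import Reals ZArith.
From Coquelicot Require Import Coquelicot.
Open Scope R_scope.

(* Grid points z_j = (j - 1/2) dz, for half-integer j given as a real. *)
Definition zpt (dz x : R) : R := (x - 1/2) * dz.

Definition Phi_a (Phi : R -> R) (alpha : R) (z : R) : R := / alpha * Phi (z / alpha).

Definition Phi_ij (Phi : R -> R) (alpha dz : R) (i j : Z) : R :=
  RInt (fun zeta => Phi_a Phi alpha (zeta - zpt dz (IZR i - 1/2)))
       (zpt dz (IZR j - 1/2)) (zpt dz (IZR j + 1/2)).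

Definition conv_from (Phi : R -> R) (alpha dz : R) (u : Z -> R) (i : Z) : R :=
  Series (fun k : nat => Phi_ij Phi alpha dz i (i + Z.of_nat k)%Z * u (i + Z.of_nat k)%Z).

Definition Wf (V : R -> R) (w : R) : R := V (/ w).

(* Sum over Z of a (nonnegative) family, as an extended real:
   the supremum of the symmetric partial sums sum_{i=-N}^{N} a i. *)
Definition zsum (a : Z -> R) : Rbar :=
  Lub_Rbar (fun s => exists N : nat,
    s = sum_n (fun k : nat => a (Z.of_nat k - Z.of_nat N)%Z) (2 * N)).

Definition BV (u : Z -> R) : Rbar := zsum (fun i => Rabs (u (i + 1)%Z - u i)).

Definition supWp (V : R -> R) : Rbar :=
  Lub_Rbar (fun y => exists w, 1 <= w /\ y = Derive (Wf V) w).
Definition normWp (V : R -> R) : Rbar :=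
  Lub_Rbar (fun y => exists w, 1 <= w /\ y = Rabs (Derive (Wf V) w)).

(* Main.v *)
Require Import Defs.
From Stdlib Require Import Reals ZArith Lia Lra Classical.
From Coquelicot Require Import Coquelicot.
Open Scope R_scope.


Lemma Phi_info (Phi : R -> R)
  (HPhi_int : is_RInt_gen Phi (at_point 0) (Rbar_locally p_infty) 1) :
  forall eps : posreal, exists M, forall y, M < y ->
    exists v, is_RInt Phi 0 y v /\ Rabs (v - 1) < eps.
Proof.
  intros eps.
  assert (H := HPhi_int (ball 1 eps) (locally_ball 1 eps)).
  destruct H as [Q R' HQ HR Hp].
  destruct HR as [M HM]. exists M. intros y Hy.
  destruct (Hp 0 y HQ (HM y Hy)) as [v [Hv Hb]].
  exists v; split; [exact Hv|].
  unfold ball in Hb; simpl in Hb. unfold AbsRing_ball, abs, minus, plus, opp in Hb; simpl in Hb. exact Hb.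
Qed.

Lemma Phi_ex (Phi : R -> R)
  (HPhi_int : is_RInt_gen Phi (at_point 0) (Rbar_locally p_infty) 1) :
  forall a b, 0 <= a <= b -> ex_RInt Phi a b.
Proof.
  intros a b Hab.
  destruct (Phi_info Phi HPhi_int (mkposreal 1 Rlt_0_1)) as [M HM].
  destruct (HM (Rmax M b + 1)) as [v [Hv _]].
  { assert (M <= Rmax M b) by apply Rmax_l. lra. }
  assert (b <= Rmax M b) by apply Rmax_r.
  apply (ex_RInt_Chasles_2 Phi 0 a b). lra.
  apply (ex_RInt_Chasles_1 Phi 0 b (Rmax M b + 1)). lra.
  exists v; exact Hv.
Qed.

Lemma Phi_lim (Phi : R -> R)
  (HPhi_int : is_RInt_gen Phi (at_point 0) (Rbar_locally p_infty) 1) :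
  forall eps : posreal, exists M, forall y, M < y -> Rabs (RInt Phi 0 y - 1) < eps.
Proof.
  intros eps. destruct (Phi_info Phi HPhi_int eps) as [M HM].
  exists M. intros y Hy. destruct (HM y Hy) as [v [Hv Hb]].
  rewrite (is_RInt_unique _ _ _ _ Hv). exact Hb.
Qed.

Definition pk (Phi : R -> R) (c : R) (k : nat) : R :=
  RInt Phi (INR k * c) (INR (S k) * c).

Lemma pk_nonneg Phi c (HPhi_nonneg : forall z, 0 <= z -> 0 <= Phi z)
  (HPhi_int : is_RInt_gen Phi (at_point 0) (Rbar_locally p_infty) 1)
  (Hc : 0 < c) k : 0 <= pk Phi c k.
Proof.
  unfold pk. assert (0 <= INR k) by apply pos_INR. rewrite S_INR.
  apply RInt_ge_0. nra. apply Phi_ex; [exact HPhi_int|]. nra.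
  intros x Hx. apply HPhi_nonneg. nra.
Qed.

Lemma pk_mono Phi c
  (HPhi_noninc : forall z1 z2, 0 <= z1 -> z1 <= z2 -> Phi z2 <= Phi z1)
  (HPhi_int : is_RInt_gen Phi (at_point 0) (Rbar_locally p_infty) 1)
  (Hc : 0 < c) k : pk Phi c (S k) <= pk Phi c k.
Proof.
  unfold pk. assert (0 <= INR k) by apply pos_INR.
  assert (0 <= INR k * c) by (apply Rmult_le_pos; lra).
 
  assert (E : RInt Phi (INR (S k) * c) (INR (S (S k)) * c)
     = RInt (fun y => scal 1 (Phi (1 * y + c))) (INR k * c) (INR (S k) * c)).
  { rewrite (RInt_comp_lin Phi 1 c). f_equal. rewrite !S_INR. ring. rewrite !S_INR. ring. apply Phi_ex. exact HPhi_int. rewrite !S_INR. lra. }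
  rewrite E. apply RInt_le.
  - rewrite S_INR; lra.
  - apply (ex_RInt_comp_lin Phi 1 c). apply Phi_ex. exact HPhi_int. rewrite !S_INR; lra.
  - apply Phi_ex. exact HPhi_int. rewrite !S_INR; lra.
  - intros x Hx. rewrite S_INR in Hx. unfold scal; simpl; unfold mult; simpl.
    rewrite Rmult_1_l, Rmult_1_l. apply HPhi_noninc; lra.
Qed.
Lemma pk_sum Phi c
  (HPhi_int : is_RInt_gen Phi (at_point 0) (Rbar_locally p_infty) 1)
  (Hc : 0 < c) n : sum_n (pk Phi c) n = RInt Phi 0 (INR (S n) * c).
Proof.
  induction n.
  - rewrite sum_O. unfold pk. simpl INR. rewrite Rmult_0_l. reflexivity.
  - rewrite sum_Sn, IHn. unfold pk.
    assert (0 <= INR n) by apply pos_INR.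
    apply (RInt_Chasles Phi).
    + apply Phi_ex; [exact HPhi_int|]. rewrite S_INR; nra.
    + apply Phi_ex; [exact HPhi_int|]. rewrite !S_INR; nra.
Qed.

Lemma pk_series Phi c
  (HPhi_int : is_RInt_gen Phi (at_point 0) (Rbar_locally p_infty) 1)
  (Hc : 0 < c) : is_series (pk Phi c) 1.
Proof.
  unfold is_series. apply filterlim_locally. intros eps.
  destruct (Phi_lim Phi HPhi_int eps) as [M HM].
  destruct (nfloor_ex (Rmax 0 (M / c)) (Rmax_l _ _)) as [N HN].
  exists N. intros n Hn. rewrite (pk_sum Phi c HPhi_int Hc). rewrite S_INR.
  assert (INR N <= INR n) by (apply le_INR; lia).
  assert (M / c <= Rmax 0 (M / c)) by apply Rmax_r.
  assert (M = (M / c) * c) by (field; lra).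
  assert (HH : M < (INR n + 1) * c).
  { rewrite H1 at 1. apply Rmult_lt_compat_r; lra. }
  generalize (HM _ HH). 
  unfold ball; simpl; unfold AbsRing_ball, abs, minus, plus, opp; simpl. tauto.
Qed.

Lemma pk_K1 Phi alpha dz
  (HPhi_int : is_RInt_gen Phi (at_point 0) (Rbar_locally p_infty) 1)
  (Halpha : 0 < alpha) (Hdz : 0 < dz) i k :
  Phi_ij Phi alpha dz i (i + Z.of_nat k)%Z = pk Phi (dz / alpha) k.
Proof.
  unfold Phi_ij, pk, zpt, Phi_a.
  rewrite plus_IZR, <- INR_IZR_INZ.
  set (v := - ((IZR i - 1) * dz) / alpha).
  assert (E : forall zeta, / alpha * Phi ((zeta - (IZR i - 1 / 2 - 1 / 2) * dz) / alpha)
     = scal (/ alpha) (Phi (/ alpha * zeta + v))).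
  { intros z. unfold scal; simpl; unfold mult; simpl. f_equal. f_equal.
    unfold v. field. lra. }
  rewrite (RInt_ext _ _ _ _ (fun x _ => E x)).
  assert (0 <= INR k) by apply pos_INR.
  rewrite (RInt_comp_lin Phi (/ alpha) v).
  - f_equal; unfold v; rewrite ?S_INR; field; lra.
  - apply Phi_ex; [exact HPhi_int|].
    assert (E1 : / alpha * ((IZR i + INR k - 1 / 2 - 1 / 2) * dz) + v = INR k * (dz/alpha))
      by (unfold v; field; lra).
    assert (E2 : / alpha * ((IZR i + INR k + 1 / 2 - 1 / 2) * dz) + v = INR (S k) * (dz/alpha))
      by (unfold v; rewrite S_INR; field; lra).
    rewrite E1, E2, S_INR. assert (0 < dz/alpha) by (apply Rdiv_lt_0_compat; lra). nra.
Qed.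

Lemma Series_zero : Series (fun _ : nat => 0) = 0.
Proof.
  transitivity (Series (fun _ : nat => 0 * 1)).
  apply Series_ext; intros; ring. rewrite Series_scal_l; ring.
Qed.

Lemma Series_nonneg (a : nat -> R) : (forall n, 0 <= a n) -> ex_series a -> 0 <= Series a.
Proof.
  intros H He. rewrite <- Series_zero. apply Series_le; auto.
  intros n; split; [lra | apply H].
Qed.

Record kern (p : nat -> R) : Prop := {
  kp0 : forall k, 0 <= p k;
  kpm : forall k, p (S k) <= p k;
  kps : is_series p 1 }.

Definition qk (p : nat -> R) k := p k - p (S k).

Section KernFacts.
End KernFacts.

Lemma kern_ex p : kern p -> ex_series p.
Proof. intros K. exists 1. apply (kps p K). Qed.

Lemma kern_sum p : kern p -> Series p = 1.
Proof. intros K. apply is_series_unique. apply (kps p K). Qed.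

Lemma kern_exS p : kern p -> ex_series (fun k => p (S k)).
Proof. intros K. apply (proj1 (ex_series_incr_1 p)). apply kern_ex; exact K. Qed.

Lemma kern_p0 p : kern p -> 0 <= p 0%nat <= 1.
Proof.
  intros K. split. apply (kp0 p K).
  rewrite <- (kern_sum p K). rewrite Series_incr_1 by (apply kern_ex; auto).
  assert (0 <= Series (fun k => p (S k))).
  { apply Series_nonneg. intros; apply (kp0 p K). apply kern_exS; auto. }
  lra.
Qed.

Lemma kern_q0 p : kern p -> forall k, 0 <= qk p k.
Proof. intros K k. unfold qk. generalize (kpm p K k). lra. Qed.

Lemma kern_qex p : kern p -> ex_series (qk p).
Proof.
  intros K. apply (ex_series_minus p (fun k => p (S k))).
  apply kern_ex; auto. apply kern_exS; auto.
Qed.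

Lemma kern_qsum p : kern p -> Series (qk p) = p 0%nat.
Proof.
  intros K. unfold qk. rewrite (Series_minus p (fun k => p (S k)) (kern_ex p K) (kern_exS p K)).
  rewrite (Series_incr_1 p) by (apply kern_ex; auto). ring.
Qed.

Lemma ex_series_bnd (p : nat -> R) (g : nat -> R) B :
  (forall k, 0 <= p k) -> ex_series p -> (forall k, Rabs (g k) <= B) ->
  ex_series (fun k => p k * g k).
Proof.
  intros H0 He Hg. apply (@ex_series_le R_AbsRing R_CompleteNormedModule (fun k => p k * g k) (fun k => B * p k)).
  - intros k. change (norm (p k * g k)) with (Rabs (p k * g k)).
    rewrite Rabs_mult, Rabs_pos_eq by apply H0. rewrite Rmult_comm.
    apply Rmult_le_compat_r. apply H0. apply Hg.
  - exact (ex_series_scal_l B p He).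
Qed.

Definition conv (p : nat -> R) (u : Z -> R) (i : Z) : R :=
  Series (fun k => p k * u (i + Z.of_nat k)%Z).

Lemma conv_ex p u B i : kern p -> (forall j, Rabs (u j) <= B) ->
  ex_series (fun k => p k * u (i + Z.of_nat k)%Z).
Proof. intros K Hu. apply ex_series_bnd with B. apply (kp0 p K). apply kern_ex; auto. intros; apply Hu. Qed.

Lemma conv_diff p g B i : kern p -> (forall j, Rabs (g j) <= B) ->
  conv p g (i + 1)%Z - conv p g i =
  - p 0%nat * g i + Series (fun k => qk p k * g (i + 1 + Z.of_nat k)%Z).
Proof.
  intros K Hg. unfold conv.
  rewrite (Series_incr_1 (fun k => p k * g (i + Z.of_nat k)%Z)) by (apply conv_ex with B; auto).
  replace (i + Z.of_nat 0)%Z with i by lia.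
  assert (E : Series (fun k => p (S k) * g (i + Z.of_nat (S k))%Z)
            = Series (fun k => p (S k) * g (i + 1 + Z.of_nat k)%Z)).
  { apply Series_ext. intros k. f_equal. f_equal. lia. }
  rewrite E.
  assert (Ex1 : ex_series (fun k => p k * g (i + 1 + Z.of_nat k)%Z)) by (apply conv_ex with B; auto).
  assert (Ex2 : ex_series (fun k => p (S k) * g (i + 1 + Z.of_nat k)%Z)).
  { apply ex_series_bnd with B. intros; apply (kp0 p K). apply kern_exS; auto. intros; apply Hg. }
  assert (E2 : Series (fun k => qk p k * g (i + 1 + Z.of_nat k)%Z) =
     Series (fun k => p k * g (i + 1 + Z.of_nat k)%Z) - Series (fun k => p (S k) * g (i + 1 + Z.of_nat k)%Z)).
  { rewrite <- Series_minus by assumption. apply Series_ext. intros; unfold qk; ring. }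
  rewrite E2. ring.
Qed.

Lemma conv_sub p g B i : kern p -> (forall j, Rabs (g j) <= B) ->
  conv p g (i + 1)%Z - conv p g i = conv p (fun j => g (j + 1)%Z - g j) i.
Proof.
  intros K Hg. unfold conv.
  rewrite <- Series_minus by (apply conv_ex with B; auto).
  apply Series_ext. intros k. replace (i + 1 + Z.of_nat k)%Z with (i + Z.of_nat k + 1)%Z by lia. ring.
Qed.

Lemma conv_const p g c B i : kern p -> (forall j, Rabs (g j) <= B) ->
  conv p (fun j => g j - c) i = conv p g i - c.
Proof.
  intros K Hg. unfold conv.
  assert (E : Series (fun k => p k * (g (i + Z.of_nat k)%Z - c)) =
     Series (fun k => p k * g (i + Z.of_nat k)%Z) - Series (fun k => p k * c)).
  { rewrite <- Series_minus. apply Series_ext; intros; ring.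
    apply conv_ex with B; auto.
    apply ex_series_bnd with (Rabs c). apply (kp0 p K). apply kern_ex; auto. intros; lra. }
  rewrite E, Series_scal_r, (kern_sum p K). ring.
Qed.

Lemma conv_bounds p u m M i : kern p -> (forall j, 0 <= m <= u j /\ u j <= M) ->
  m <= conv p u i <= M.
Proof.
  intros K Hu. assert (HB : forall j, Rabs (u j) <= M).
  { intros j; destruct (Hu j). rewrite Rabs_pos_eq; lra. }
  unfold conv. split.
  - replace m with (Series (fun k => p k * m)).
    apply Series_le. intros k. destruct (Hu (i + Z.of_nat k)%Z). generalize (kp0 p K k); intros.
    split. apply Rmult_le_pos; lra. apply Rmult_le_compat_l; lra.
    apply conv_ex with M; auto.
    rewrite Series_scal_r, (kern_sum p K); ring.
  - replace M with (Series (fun k => p k * M)).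
    apply Series_le. intros k. destruct (Hu (i + Z.of_nat k)%Z). generalize (kp0 p K k); intros.
    split. apply Rmult_le_pos; lra. apply Rmult_le_compat_l; lra.
    apply ex_series_bnd with (Rabs M). apply (kp0 p K). apply kern_ex; auto. intros; lra.
    rewrite Series_scal_r, (kern_sum p K); ring.
Qed.

Fixpoint zs (a : Z -> R) (lo : Z) (n : nat) : R :=
  match n with O => 0 | S n => zs a lo n + a (lo + Z.of_nat n)%Z end.

Lemma zs_ext a b lo n : (forall i, a i = b i) -> zs a lo n = zs b lo n.
Proof. intros H; induction n; simpl; [reflexivity| rewrite IHn, H; reflexivity]. Qed.

Lemma zs_le a b lo n : (forall i, a i <= b i) -> zs a lo n <= zs b lo n.
Proof. intros H; induction n; simpl. lra. generalize (H (lo + Z.of_nat n)%Z). lra. Qed.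

Lemma zs_nonneg a lo n : (forall i, 0 <= a i) -> 0 <= zs a lo n.
Proof. intros H; induction n; simpl. lra. generalize (H (lo + Z.of_nat n)%Z). lra. Qed.

Lemma zs_plus a b lo n : zs (fun i => a i + b i) lo n = zs a lo n + zs b lo n.
Proof. induction n; simpl. ring. rewrite IHn; ring. Qed.

Lemma zs_minus a b lo n : zs (fun i => a i - b i) lo n = zs a lo n - zs b lo n.
Proof. induction n; simpl. ring. rewrite IHn; ring. Qed.

Lemma zs_scal c a lo n : zs (fun i => c * a i) lo n = c * zs a lo n.
Proof. induction n; simpl. ring. rewrite IHn; ring. Qed.

Lemma zs_shift a c lo n : zs (fun i => a (i + c)%Z) lo n = zs a (lo + c) n.
Proof. induction n; simpl. ring. rewrite IHn. f_equal. f_equal. lia. Qed.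

Lemma zs_split a lo n m : zs a lo (n + m) = zs a lo n + zs a (lo + Z.of_nat n) m.
Proof.
  induction m. simpl. rewrite Nat.add_0_r. ring.
  rewrite Nat.add_succ_r. simpl. rewrite IHm. replace (lo + Z.of_nat (n + m))%Z with (lo + Z.of_nat n + Z.of_nat m)%Z by lia. ring.
Qed.

Lemma zs_window a lo n L K : (forall i, 0 <= a i) -> (L <= lo)%Z ->
  (lo + Z.of_nat n <= L + Z.of_nat K)%Z -> zs a lo n <= zs a L K.
Proof.
  intros H H1 H2.
  set (k1 := Z.to_nat (lo - L)).
  set (r := (K - k1 - n)%nat).
  assert (EK : K = (k1 + (n + r))%nat) by (unfold r, k1; lia).
  rewrite EK, zs_split, zs_split.
  replace (L + Z.of_nat k1)%Z with lo by (unfold k1; lia).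
  generalize (zs_nonneg a L k1 H) (zs_nonneg a (lo + Z.of_nat n) r H). lra.
Qed.

Lemma ex_series_zero : ex_series (fun _ : nat => 0).
Proof.
  assert (Hg : is_series (fun n => (1/2) ^ n) (/ (1 - 1/2))).
  { apply is_series_geom. rewrite Rabs_pos_eq; lra. }
  exists (scal 0 (/ (1 - 1/2))).
  apply (is_series_ext (fun n => scal 0 ((1/2)^n))).
  intros n. unfold scal; simpl; unfold mult; simpl; ring.
  exact (@is_series_scal_l R_AbsRing R_NormedModule 0 _ _ Hg).
Qed.

Lemma zs_Series (f : Z -> nat -> R) lo n : (forall i, ex_series (f i)) ->
  ex_series (fun k => zs (fun i => f i k) lo n) /\
  zs (fun i => Series (f i)) lo n = Series (fun k => zs (fun i => f i k) lo n).
Proof.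
  intros Hf. induction n.
  - simpl. split. apply ex_series_zero. rewrite Series_zero; reflexivity.
  - destruct IHn as [IH1 IH2]. simpl. split.
    + apply (ex_series_plus (fun k => zs (fun i => f i k) lo n) (fun k => f (lo + Z.of_nat n)%Z k)); auto.
    + rewrite IH2. rewrite <- Series_plus; auto.
Qed.

Lemma SS_zs a N : sum_n (fun k => a (Z.of_nat k - Z.of_nat N)%Z) (2*N) = zs a (- Z.of_nat N) (S (2*N)).
Proof.
  generalize (2 * N)%nat. intros n. induction n.
  - rewrite sum_O. simpl. rewrite Rplus_0_l. f_equal. lia.
  - rewrite sum_Sn, IHn. change (plus ?x ?y) with (x + y). simpl (zs a _ (S (S n))).
    f_equal. f_equal. lia.
Qed.

Lemma win_sym a lo n : (forall i, 0 <= a i) ->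
  zs a lo n <= zs a (- Z.of_nat (Z.to_nat (Z.abs lo) + n)) (S (2 * (Z.to_nat (Z.abs lo) + n))).
Proof. intros H. apply zs_window; auto; lia. Qed.

Lemma zsum_ub a B : (forall i, 0 <= a i) -> (forall lo n, zs a lo n <= B) -> Rbar_le (zsum a) (Finite B).
Proof.
  intros H0 HB. unfold zsum. destruct (Lub_Rbar_correct (fun s => exists N : nat,
    s = sum_n (fun k : nat => a (Z.of_nat k - Z.of_nat N)%Z) (2 * N))) as [_ Hl].
  apply Hl. intros s [N ->]. rewrite SS_zs. apply (HB (- Z.of_nat N)%Z (S (2*N))).
Qed.

Lemma zsum_lb a : forall N, Rbar_le (Finite (zs a (- Z.of_nat N) (S (2*N)))) (zsum a).
Proof.
  intros N. unfold zsum. destruct (Lub_Rbar_correct (fun s => exists N : nat,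
    s = sum_n (fun k : nat => a (Z.of_nat k - Z.of_nat N)%Z) (2 * N))) as [Hu _].
  apply Hu. exists N. rewrite SS_zs. reflexivity.
Qed.

Lemma zsum_val a B : (forall i, 0 <= a i) -> (forall lo n, zs a lo n <= B) ->
  exists z, zsum a = Finite z /\ 0 <= z <= B.
Proof.
  intros H0 HB. generalize (zsum_ub a B H0 HB) (zsum_lb a 0%nat).
  generalize (zs_nonneg a (- Z.of_nat 0) (S (2*0)) H0).
  generalize (zs a (- Z.of_nat 0) (S (2*0))). intros r Hr.
  destruct (zsum a) as [z| |]; simpl; intros H1 H2; try contradiction.
  exists z. split; auto. split; lra.
Qed.

Lemma zsum_win a : (forall i, 0 <= a i) -> is_finite (zsum a) ->
  forall lo n, zs a lo n <= real (zsum a).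
Proof.
  intros H0 Hf lo n. eapply Rle_trans. apply win_sym; auto.
  generalize (zsum_lb a (Z.to_nat (Z.abs lo) + n)). rewrite <- Hf. simpl. auto.
Qed.

Lemma win_sup a B : (forall i, 0 <= a i) -> (forall lo n, zs a lo n <= B) ->
  exists A, (forall lo n, zs a lo n <= A) /\
    (forall eps, 0 < eps -> exists lo n, A - eps < zs a lo n).
Proof.
  intros H0 HB.
  destruct (completeness (fun s => exists lo n, s = zs a lo n)) as [A [Hu Hl]].
  - exists B. intros s [lo [n ->]]. apply HB.
  - exists 0. exists 0%Z, 0%nat. reflexivity.
  - exists A. split.
    + intros lo n. apply Hu. exists lo, n. reflexivity.
    + intros eps He. apply NNPP. intros Hn.
      assert (A <= A - eps). { apply Hl. intros s [lo [n ->]].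
        apply Rnot_lt_le. intros Hc. apply Hn. exists lo, n. exact Hc. }
      lra.
Qed.

Lemma eps_le x B c : 0 <= c -> (forall eps, 0 < eps -> x <= B + c * eps) -> x <= B.
Proof.
  intros Hc H. apply Rnot_lt_le. intros Hx.
  assert (He : 0 < (x - B) / (c + 1)) by (apply Rdiv_lt_0_compat; lra).
  specialize (H _ He).
  assert (c * ((x - B) / (c + 1)) < x - B).
  { apply Rlt_le_trans with ((c+1) * ((x - B) / (c + 1))). apply Rmult_lt_compat_r; lra.
    right. field. lra. }
  lra.
Qed.

Lemma conv_abs_win p b Bb Bw lo n : kern p -> (forall j, Rabs (b j) <= Bb) ->
  (forall lo n, zs (fun i => Rabs (b i)) lo n <= Bw) ->
  zs (fun i => Rabs (conv p b i)) lo n <= Bw.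
Proof.
  intros K Hb Hw.
  assert (Hex : forall i, ex_series (fun k => p k * Rabs (b (i + Z.of_nat k)%Z))).
  { intros i. apply ex_series_bnd with Bb. apply (kp0 p K). apply kern_ex; auto.
    intros k. rewrite Rabs_Rabsolu. apply Hb. }
  apply Rle_trans with (zs (fun i => Series (fun k => p k * Rabs (b (i + Z.of_nat k)%Z))) lo n).
  { apply zs_le. intros i. unfold conv.
    eapply Rle_trans. apply Series_Rabs.
    - apply (ex_series_ext (fun k => p k * Rabs (b (i + Z.of_nat k)%Z))).
      intros k. rewrite Rabs_mult, (Rabs_pos_eq (p k)) by apply (kp0 p K). reflexivity.
      apply Hex.
    - right. apply Series_ext. intros k. rewrite Rabs_mult, (Rabs_pos_eq (p k)) by apply (kp0 p K). reflexivity. }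
  destruct (zs_Series (fun i k => p k * Rabs (b (i + Z.of_nat k)%Z)) lo n Hex) as [He2 E2].
  rewrite E2.
  apply Rle_trans with (Series (fun k => p k * Bw)).
  - apply Series_le.
    + intros k. rewrite zs_scal. split.
      apply Rmult_le_pos. apply (kp0 p K). apply zs_nonneg. intros; apply Rabs_pos.
      apply Rmult_le_compat_l. apply (kp0 p K).
      rewrite (zs_shift (fun i => Rabs (b i)) (Z.of_nat k)). apply Hw.
    + apply ex_series_bnd with (Rabs Bw). apply (kp0 p K). apply kern_ex; auto. intros; apply Rle_refl.
  - rewrite Series_scal_r, (kern_sum p K). lra.
Qed.

Lemma conv_lin p g Bg c1 c2 i : kern p -> (forall j, Rabs (g j) <= Bg) ->
  conv p (fun j => c1 * g j + c2) i = c1 * conv p g i + c2.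
Proof.
  intros K Hg. unfold conv.
  transitivity (Series (fun k => c1 * (p k * g (i + Z.of_nat k)%Z)) + Series (fun k => p k * c2)).
  2:{ rewrite Series_scal_l, Series_scal_r, (kern_sum p K). ring. }
  rewrite <- Series_plus.
  apply Series_ext. intros; ring.
  apply (ex_series_ext (fun k => c1 * (p k * g (i + Z.of_nat k)%Z))). intros; reflexivity.
  exact (ex_series_scal_l c1 _ (conv_ex p g Bg i K Hg)).
  apply ex_series_bnd with (Rabs c2). apply (kp0 p K). apply kern_ex; auto. intros; apply Rle_refl.
Qed.

Definition Tm (lam : R) (p : nat -> R) (W : R -> R) (u : Z -> R) (i : Z) : R :=
  u i + lam * (conv p (fun j => W (u j)) (i + 1)%Z - conv p (fun j => W (u j)) i).

Lemma key_nonneg p g Bg lam e i : kern p -> 0 <= lam -> (forall j, Rabs (g j) <= Bg) ->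
  (forall j, 0 <= g j) -> lam * p 0%nat * g i <= e ->
  0 <= e + lam * (conv p g (i + 1)%Z - conv p g i).
Proof.
  intros K Hl Hg Hg0 He. rewrite (conv_diff p g Bg i K Hg).
  assert (0 <= Series (fun k => qk p k * g (i + 1 + Z.of_nat k)%Z)).
  { apply Series_nonneg. intros k. apply Rmult_le_pos. apply kern_q0; auto. apply Hg0.
    apply ex_series_bnd with Bg. apply kern_q0; auto. apply kern_qex; auto. intros; apply Hg. }
  assert (0 <= lam * Series (fun k => qk p k * g (i + 1 + Z.of_nat k)%Z)) by (apply Rmult_le_pos; lra).
  lra.
Qed.

Definition Wgood (W : R -> R) (S : R) : Prop :=
  forall x y, 1 <= x <= y -> 0 <= W y - W x <= S * (y - x).

Lemma W_abs W S x y : Wgood W S -> 1 <= x -> 1 <= y -> Rabs (W y - W x) <= S * Rabs (y - x).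
Proof.
  intros HW Hx Hy. destruct (Rle_dec x y) as [H|H].
  - destruct (HW x y (conj Hx H)). rewrite !Rabs_pos_eq by lra. lra.
  - destruct (HW y x (conj Hy (Rlt_le _ _ (Rnot_le_lt _ _ H)))).
    rewrite Rabs_left1 by lra. rewrite (Rabs_left1 (y - x)) by lra. lra.
Qed.

Lemma W_sign W S x y c : Wgood W S -> 1 <= x -> 1 <= y -> 0 <= c -> c * S <= 1 ->
  Rabs ((y - x) - c * (W y - W x)) <= Rabs (y - x) - c * Rabs (W y - W x).
Proof.
  intros HW Hx Hy Hc HcS. destruct (Rle_dec x y) as [H|H].
  - destruct (HW x y (conj Hx H)) as [H1 H2].
    assert (c * (W y - W x) <= c * (S * (y - x))) by (apply Rmult_le_compat_l; lra).
    assert (c * (S * (y - x)) <= 1 * (y - x)) by (rewrite <- Rmult_assoc; apply Rmult_le_compat_r; lra).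
    assert (0 <= c * (W y - W x)) by (apply Rmult_le_pos; lra).
    rewrite !Rabs_pos_eq by lra. lra.
  - assert (Hyx : y <= x) by lra.
    destruct (HW y x (conj Hy Hyx)) as [H1 H2].
    assert (c * (W x - W y) <= c * (S * (x - y))) by (apply Rmult_le_compat_l; lra).
    assert (c * (S * (x - y)) <= 1 * (x - y)) by (rewrite <- Rmult_assoc; apply Rmult_le_compat_r; lra).
    assert (0 <= c * (W x - W y)) by (apply Rmult_le_pos; lra).
    rewrite (Rabs_left1 (y - x)) by lra. rewrite (Rabs_left1 (W y - W x)) by lra.
    rewrite Rabs_left1. lra.
    assert (c * (W y - W x) = - (c * (W x - W y))) by ring. lra.
Qed.

Lemma Tm_bounds p W S lam u m M i : kern p -> Wgood W S -> 0 <= lam -> 0 <= S -> lam * S <= 1 ->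
  1 <= m -> (forall j, m <= u j <= M) -> m <= Tm lam p W u i <= M.
Proof.
  intros K HW Hl HS HlS Hm Hu.
  destruct (kern_p0 p K) as [Hp0 Hp1].
  assert (HMm : m <= M) by (destruct (Hu 0%Z); lra).
  assert (HWm : forall j, 0 <= W (u j) - W m <= S * (u j - m)).
  { intros j. apply HW. destruct (Hu j); lra. }
  assert (HWM : forall j, 0 <= W M - W (u j) <= S * (M - u j)).
  { intros j. apply HW. destruct (Hu j); lra. }
  set (BG := Rabs (W m) + S * (M - m)).
  assert (HG : forall j, Rabs (W (u j)) <= BG).
  { intros j. destruct (Hu j). destruct (HWm j) as [H1 H2].
    unfold BG. assert (S * (u j - m) <= S * (M - m)) by (apply Rmult_le_compat_l; lra).
    replace (W (u j)) with (W m + (W (u j) - W m)) by ring.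
    eapply Rle_trans. apply Rabs_triang. rewrite (Rabs_pos_eq (W (u j) - W m)) by lra. lra. }
  assert (HpS : lam * p 0%nat * S <= 1).
  { replace (lam * p 0%nat * S) with (p 0%nat * (lam * S)) by ring.
    assert (0 <= lam * S) by (apply Rmult_le_pos; lra).
    apply Rle_trans with (1 * 1). apply Rmult_le_compat; lra. lra. }
  unfold Tm. split.
  - set (g := fun j => 1 * W (u j) + - W m).
    assert (Hg : forall j, Rabs (g j) <= BG + Rabs (W m)).
    { intros j. unfold g. rewrite Rmult_1_l. eapply Rle_trans. apply Rabs_triang.
      rewrite Rabs_Ropp. specialize (HG j). lra. }
    assert (E1 : forall j, conv p g j = 1 * conv p (fun j => W (u j)) j + - W m).
    { intros j. unfold g. apply (conv_lin p (fun j => W (u j)) BG); auto. }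
    assert (E : u i + lam * (conv p (fun j => W (u j)) (i + 1)%Z - conv p (fun j => W (u j)) i) - m
      = (u i - m) + lam * (conv p g (i + 1)%Z - conv p g i)) by (rewrite !E1; ring).
    cut (0 <= (u i - m) + lam * (conv p g (i + 1)%Z - conv p g i)). lra.
    apply key_nonneg with (BG + Rabs (W m)); auto.
    + intros j. unfold g. destruct (HWm j); lra.
    + unfold g. destruct (Hu i). destruct (HWm i) as [H1 H2].
      apply Rle_trans with (lam * p 0%nat * (S * (u i - m))).
      apply Rmult_le_compat_l. apply Rmult_le_pos; lra. lra.
      rewrite <- Rmult_assoc. rewrite <- (Rmult_1_l (u i - m)) at 2. apply Rmult_le_compat_r; lra.
  - set (g := fun j => -1 * W (u j) + W M).
    assert (Hg : forall j, Rabs (g j) <= BG + Rabs (W M)).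
    { intros j. unfold g. replace (-1 * W (u j) + W M) with (- W (u j) + W M) by ring.
      eapply Rle_trans. apply Rabs_triang.
      rewrite Rabs_Ropp. specialize (HG j). lra. }
    assert (E1 : forall j, conv p g j = -1 * conv p (fun j => W (u j)) j + W M).
    { intros j. unfold g. apply (conv_lin p (fun j => W (u j)) BG); auto. }
    cut (0 <= (M - u i) + lam * (conv p g (i + 1)%Z - conv p g i)).
    { rewrite !E1. intros. lra. }
    apply key_nonneg with (BG + Rabs (W M)); auto.
    + intros j. unfold g. destruct (HWM j); lra.
    + unfold g. destruct (Hu i). destruct (HWM i) as [H1 H2].
      apply Rle_trans with (lam * p 0%nat * (S * (M - u i))).
      apply Rmult_le_compat_l. apply Rmult_le_pos; lra. lra.
      rewrite <- Rmult_assoc. rewrite <- (Rmult_1_l (M - u i)) at 2. apply Rmult_le_compat_r; lra.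
Qed.

Lemma Tm_diff p W lam u BG i : kern p -> (forall j, Rabs (W (u j)) <= BG) ->
  Tm lam p W u (i + 1)%Z - Tm lam p W u i =
  (u (i + 1)%Z - u i) - lam * p 0%nat * (W (u (i + 1)%Z) - W (u i)) +
  lam * Series (fun k => qk p k * (W (u (i + 1 + Z.of_nat k + 1)%Z) - W (u (i + 1 + Z.of_nat k)%Z))).
Proof.
  intros K HG. unfold Tm.
  assert (Ha : forall j, Rabs (W (u (j + 1)%Z) - W (u j)) <= BG + BG).
  { intros j. eapply Rle_trans. apply Rabs_triang. rewrite Rabs_Ropp. generalize (HG (j+1)%Z) (HG j). lra. }
  rewrite !(conv_sub p (fun j => W (u j)) BG) by auto.
  set (a := fun j => W (u (j + 1)%Z) - W (u j)).
  transitivity ((u (i + 1)%Z - u i) + lam * (conv p a (i + 1)%Z - conv p a i)).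
  { unfold a. ring. }
  rewrite (conv_diff p a (BG + BG) i K Ha). unfold a. ring.
Qed.

Lemma W_bnd W S (u : Z -> R) m M : Wgood W S -> 0 <= S -> 1 <= m -> (forall j, m <= u j <= M) ->
  forall j, Rabs (W (u j)) <= Rabs (W m) + S * (M - m).
Proof.
  intros HW HS Hm Hu j. destruct (Hu j).
  assert (H1 : 0 <= W (u j) - W m <= S * (u j - m)) by (apply HW; lra).
  assert (S * (u j - m) <= S * (M - m)) by (apply Rmult_le_compat_l; lra).
  replace (W (u j)) with (W m + (W (u j) - W m)) by ring.
  eapply Rle_trans. apply Rabs_triang. rewrite (Rabs_pos_eq (W (u j) - W m)) by lra. lra.
Qed.

Lemma Tm_TV p W S lam u m M B : kern p -> Wgood W S -> 0 <= lam -> 0 <= S -> lam * S <= 1 ->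
  1 <= m -> (forall j, m <= u j <= M) ->
  (forall lo n, zs (fun i => Rabs (u (i + 1)%Z - u i)) lo n <= B) ->
  forall lo n, zs (fun i => Rabs (Tm lam p W u (i + 1)%Z - Tm lam p W u i)) lo n <= B.
Proof.
  intros K HW Hl HS HlS Hm Hu HB.
  destruct (kern_p0 p K) as [Hp0 Hp1].
  set (BG := Rabs (W m) + S * (M - m)).
  assert (HG : forall j, Rabs (W (u j)) <= BG) by (apply W_bnd; auto).
  assert (HpS : lam * p 0%nat * S <= 1).
  { replace (lam * p 0%nat * S) with (p 0%nat * (lam * S)) by ring.
    assert (0 <= lam * S) by (apply Rmult_le_pos; lra).
    apply Rle_trans with (1 * 1). apply Rmult_le_compat; lra. lra. }
  assert (Hc0 : 0 <= lam * p 0%nat) by (apply Rmult_le_pos; lra).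
  set (a := fun j => W (u (j + 1)%Z) - W (u j)).
  set (d := fun j => u (j + 1)%Z - u j).
  assert (Hu1 : forall j, 1 <= u j) by (intros j; destruct (Hu j); lra).
  assert (Ha : forall j, Rabs (a j) <= S * Rabs (d j)) by (intros j; apply W_abs; auto).
  assert (Hab : forall j, Rabs (a j) <= BG + BG).
  { intros j. unfold a. eapply Rle_trans. apply Rabs_triang. rewrite Rabs_Ropp. generalize (HG (j+1)%Z) (HG j). lra. }
  assert (Hsg : forall j, Rabs (d j - lam * p 0%nat * a j) <= Rabs (d j) - lam * p 0%nat * Rabs (a j)).
  { intros j. apply W_sign with S; auto. }
  assert (Hex : forall i, ex_series (fun k => qk p k * Rabs (a (i + 1 + Z.of_nat k)%Z))).
  { intros i. apply ex_series_bnd with (BG + BG). apply kern_q0; auto. apply kern_qex; auto.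
    intros k. rewrite Rabs_Rabsolu. apply Hab. }
  assert (Hpt : forall i, Rabs (Tm lam p W u (i + 1)%Z - Tm lam p W u i) <=
     Rabs (d i) - lam * p 0%nat * Rabs (a i) + lam * Series (fun k => qk p k * Rabs (a (i + 1 + Z.of_nat k)%Z))).
  { intros i. rewrite (Tm_diff p W lam u BG i K HG).
    eapply Rle_trans. apply Rabs_triang.
    apply Rplus_le_compat. apply Hsg.
    rewrite Rabs_mult, (Rabs_pos_eq lam) by lra. apply Rmult_le_compat_l; auto.
    eapply Rle_trans. apply Series_Rabs.
    - apply (ex_series_ext (fun k => qk p k * Rabs (a (i + 1 + Z.of_nat k)%Z))).
      intros k. rewrite Rabs_mult, (Rabs_pos_eq (qk p k)) by (apply kern_q0; auto). reflexivity.
      apply Hex.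
    - right. apply Series_ext. intros k. rewrite Rabs_mult, (Rabs_pos_eq (qk p k)) by (apply kern_q0; auto). reflexivity. }
  assert (HaB : forall lo n, zs (fun i => Rabs (a i)) lo n <= S * B).
  { intros lo n. eapply Rle_trans. apply (zs_le _ (fun i => S * Rabs (d i))). exact Ha.
    rewrite zs_scal. apply Rmult_le_compat_l; [lra | apply HB]. }
  destruct (win_sup (fun i => Rabs (a i)) (S * B) (fun i => Rabs_pos _) HaB) as [A [HA1 HA2]].
  intros lo n. apply (eps_le _ B (lam * p 0%nat) Hc0). intros eps Heps.
  destruct (HA2 eps Heps) as [lo2 [n2 Hlo2]].
  set (L := Z.min lo lo2).
  set (KK := Z.to_nat (Z.max (lo + Z.of_nat n) (lo2 + Z.of_nat n2) - L)).
  assert (S1 : zs (fun i => Rabs (Tm lam p W u (i + 1)%Z - Tm lam p W u i)) lo n <=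
               zs (fun i => Rabs (Tm lam p W u (i + 1)%Z - Tm lam p W u i)) L KK).
  { apply zs_window. intros; apply Rabs_pos. unfold L; lia. unfold KK, L; lia. }
  set (Ser := fun i => Series (fun k => qk p k * Rabs (a (i + 1 + Z.of_nat k)%Z))).
  assert (S2 : zs (fun i => Rabs (Tm lam p W u (i + 1)%Z - Tm lam p W u i)) L KK <=
      zs (fun i => Rabs (d i)) L KK - (lam * p 0%nat) * zs (fun i => Rabs (a i)) L KK + lam * zs Ser L KK).
  { rewrite <- zs_scal, <- zs_scal, <- zs_minus, <- zs_plus. apply zs_le. intros i. apply Hpt. }
  assert (S3 : zs Ser L KK <= p 0%nat * A).
  { unfold Ser. destruct (zs_Series (fun i k => qk p k * Rabs (a (i + 1 + Z.of_nat k)%Z)) L KK Hex) as [He2 E2].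
    rewrite E2. rewrite <- (kern_qsum p K), <- Series_scal_r.
    apply Series_le.
    - intros k. rewrite zs_scal.
      assert (Eq : zs (fun i => Rabs (a (i + 1 + Z.of_nat k)%Z)) L KK = zs (fun i => Rabs (a i)) (L + (1 + Z.of_nat k)) KK).
      { rewrite <- (zs_shift (fun i => Rabs (a i))). apply zs_ext. intros i. f_equal. f_equal. lia. }
      rewrite Eq. split.
      apply Rmult_le_pos. apply kern_q0; auto. apply zs_nonneg. intros; apply Rabs_pos.
      apply Rmult_le_compat_l. apply kern_q0; auto. apply HA1.
    - apply ex_series_bnd with (Rabs A). apply kern_q0; auto. apply kern_qex; auto. intros; apply Rle_refl. }
  assert (S4 : zs (fun i => Rabs (d i)) L KK <= B) by apply HB.
  assert (S5 : zs (fun i => Rabs (a i)) lo2 n2 <= zs (fun i => Rabs (a i)) L KK).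
  { apply zs_window. intros; apply Rabs_pos. unfold L; lia. unfold KK, L; lia. }
  assert (S6 : lam * zs Ser L KK <= lam * (p 0%nat * A)) by (apply Rmult_le_compat_l; auto).
  assert (S7 : (lam * p 0%nat) * (A - eps) <= (lam * p 0%nat) * zs (fun i => Rabs (a i)) L KK).
  { apply Rmult_le_compat_l; auto. lra. }
  assert (E7 : lam * (p 0%nat * A) = (lam * p 0%nat) * (A - eps) + lam * p 0%nat * eps) by ring.
  lra.
Qed.

Lemma Tm_time p W S lam u m M B : kern p -> Wgood W S -> 0 <= lam -> 0 <= S ->
  1 <= m -> (forall j, m <= u j <= M) ->
  (forall lo n, zs (fun i => Rabs (u (i + 1)%Z - u i)) lo n <= B) ->
  forall lo n, zs (fun i => Rabs (Tm lam p W u i - u i)) lo n <= lam * (S * B).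
Proof.
  intros K HW Hl HS Hm Hu HB lo n.
  set (BG := Rabs (W m) + S * (M - m)).
  assert (HG : forall j, Rabs (W (u j)) <= BG) by (apply W_bnd; auto).
  set (a := fun j => W (u (j + 1)%Z) - W (u j)).
  assert (Hu1 : forall j, 1 <= u j) by (intros j; destruct (Hu j); lra).
  assert (Ha : forall j, Rabs (a j) <= S * Rabs (u (j + 1)%Z - u j)) by (intros j; apply W_abs; auto).
  assert (Hab : forall j, Rabs (a j) <= BG + BG).
  { intros j. unfold a. eapply Rle_trans. apply Rabs_triang. rewrite Rabs_Ropp. generalize (HG (j+1)%Z) (HG j). lra. }
  assert (HaB : forall lo n, zs (fun i => Rabs (a i)) lo n <= S * B).
  { intros lo' n'. eapply Rle_trans. apply (zs_le _ (fun i => S * Rabs (u (i + 1)%Z - u i))). exact Ha.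
    rewrite zs_scal. apply Rmult_le_compat_l; [lra | apply HB]. }
  assert (E : forall i, Rabs (Tm lam p W u i - u i) = lam * Rabs (conv p a i)).
  { intros i. unfold Tm. rewrite (conv_sub p (fun j => W (u j)) BG) by auto.
    replace (u i + lam * conv p (fun j => W (u (j + 1)%Z) - W (u j)) i - u i)
      with (lam * conv p a i) by (unfold a; ring).
    rewrite Rabs_mult, Rabs_pos_eq by lra. reflexivity. }
  rewrite (zs_ext _ _ lo n E), zs_scal. apply Rmult_le_compat_l; auto.
  apply conv_abs_win with (BG + BG); auto.
Qed.

Lemma Rbar_mult_pinf_l x : 0 < x -> Rbar_mult (Finite x) p_infty = p_infty.
Proof.
  intros H. unfold Rbar_mult, Rbar_mult'.
  destruct (Rle_dec 0 x) as [r|r]; [|lra].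
  destruct (Rle_lt_or_eq_dec 0 x r); [reflexivity|lra].
Qed.

Lemma Rbar_mult_pinf_r x : 0 < x -> Rbar_mult p_infty (Finite x) = p_infty.
Proof.
  intros H. unfold Rbar_mult, Rbar_mult'.
  destruct (Rle_dec 0 x) as [r|r]; [|lra].
  destruct (Rle_lt_or_eq_dec 0 x r); [reflexivity|lra].
Qed.

Lemma Rbar_mult_pinf_0 : Rbar_mult p_infty (Finite 0) = Finite 0.
Proof.
  unfold Rbar_mult, Rbar_mult'.
  destruct (Rle_dec 0 0) as [r|r]; [|lra].
  destruct (Rle_lt_or_eq_dec 0 0 r); [lra|reflexivity].
Qed.

Lemma Wf_ex V (HV_diff : forall x, 0 <= x -> ex_derive V x) t : 0 < t -> ex_derive (Wf V) t.
Proof.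
  intros Ht. unfold Wf.
  apply (ex_derive_comp V (fun y => / y) t).
  apply HV_diff. apply Rlt_le, Rinv_0_lt_compat; exact Ht.
  apply (ex_derive_inv (fun y => y) t). apply ex_derive_id. lra.
Qed.

Lemma Wf_good V S (HV_diff : forall x, 0 <= x -> ex_derive V x)
  (HV_noninc : forall x1 x2, 0 <= x1 -> x1 <= x2 -> V x2 <= V x1)
  (HS : forall w, 1 <= w -> Derive (Wf V) w <= S) : Wgood (Wf V) S.
Proof.
  intros x y [Hx Hxy]. split.
  - unfold Wf. assert (0 < /y) by (apply Rinv_0_lt_compat; lra).
    assert (/ y <= / x) by (apply Rinv_le_contravar; lra).
    generalize (HV_noninc (/ y) (/ x) (Rlt_le _ _ H) H0). lra.
  - destruct (MVT_gen (Wf V) x y (Derive (Wf V))) as [c [Hc Ec]].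
    + intros t Ht. apply Derive_correct. apply Wf_ex; auto.
      rewrite Rmin_left in Ht by lra. lra.
    + intros t Ht. apply continuity_pt_filterlim. apply (ex_derive_continuous (Wf V)).
      apply Wf_ex; auto. rewrite Rmin_left in Ht by lra. lra.
    + rewrite Rmin_left in Hc by lra. rewrite Rmax_right in Hc by lra.
      rewrite Ec. apply Rmult_le_compat_r. lra. apply HS. lra.
Qed.

Theorem corollary2p3
  (Phi : R -> R) (alpha : R) (V : R -> R) (dz dt : R)
  (y0 : Z -> R) (w : nat -> Z -> R)
  (* kernel *)
  (HPhi_nonneg : forall z, 0 <= z -> 0 <= Phi z)
  (HPhi_noninc : forall z1 z2, 0 <= z1 -> z1 <= z2 -> Phi z2 <= Phi z1)
  (HPhi_int : is_RInt_gen Phi (at_point 0) (Rbar_locally p_infty) 1)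
  (HPhi_mom : ex_RInt_gen (fun z => z * Phi z) (at_point 0) (Rbar_locally p_infty))
  (Halpha : 0 < alpha)
  (* flux: V in C^1([0,oo)), non-increasing *)
  (HV_diff : forall x, 0 <= x -> ex_derive V x)
  (HV_C1 : forall x, 0 <= x -> continuous (Derive V) x)
  (HV_noninc : forall x1 x2, 0 <= x1 -> x1 <= x2 -> V x2 <= V x1)
  (* discretization *)
  (Hdz : 0 < dz) (Hdt : 0 < dt)
  (* CFL: 0 <= lambda sup_{w>=1} W'(w) <= 1, lambda = dt/dz *)
  (HCFL : Rbar_le (Finite 0) (Rbar_mult (dt / dz) (supWp V)) /\
          Rbar_le (Rbar_mult (dt / dz) (supWp V)) (Finite 1))
  (* initial datum *)
  (Hy_bnd : exists M, forall i, Rabs (y0 i) <= M)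
  (Hy_ge1 : forall i, 1 <= y0 i)
  (Hy_BV : is_finite (BV y0))
  (* the scheme *)
  (Hw0 : forall i, w 0%nat i = conv_from Phi alpha dz y0 i)
  (HwS : forall n i, w (S n) i =
      w n i + (dt / dz) * (conv_from Phi alpha dz (fun j => Wf V (w n j)) (i + 1)%Z
                           - conv_from Phi alpha dz (fun j => Wf V (w n j)) i)) :
  forall (n : nat) (i : Z),
    Rbar_le (Finite 1) (Glb_Rbar (fun y => exists j, y = y0 j)) /\
    Rbar_le (Glb_Rbar (fun y => exists j, y = y0 j)) (Finite (w n i)) /\
    Rbar_le (Finite (w n i)) (Lub_Rbar (fun y => exists j, y = y0 j)) /\
    Rbar_le (BV (w n)) (BV y0) /\
    Rbar_le (Rbar_mult dz (zsum (fun k => Rabs (w (S n) k - w n k))))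
            (Rbar_mult (Rbar_mult dt (normWp V)) (BV y0)).
Proof.
  set (c := dz / alpha).
  assert (Hc : 0 < c) by (unfold c; apply Rdiv_lt_0_compat; lra).
  set (p := pk Phi c).
  assert (Kp : kern p).
  { constructor. apply pk_nonneg; auto. apply pk_mono; auto. apply pk_series; auto. }
  assert (Hconv : forall g i, conv_from Phi alpha dz g i = conv p g i).
  { intros g i. unfold conv_from, conv. apply Series_ext. intros k.
    rewrite pk_K1; auto. }
  set (lam := dt / dz).
  assert (Hlam : 0 < lam) by (unfold lam; apply Rdiv_lt_0_compat; lra).
  assert (HE1 : Rbar_le (Finite (Derive (Wf V) 1)) (supWp V)).
  { unfold supWp. destruct (Lub_Rbar_correct (fun y => exists w, 1 <= w /\ y = Derive (Wf V) w)) as [Hu _].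
    apply Hu. exists 1. split; [lra|reflexivity]. }
  assert (HEub : forall b : Rbar, is_ub_Rbar (fun y => exists w, 1 <= w /\ y = Derive (Wf V) w) b ->
     Rbar_le (supWp V) b).
  { unfold supWp. destruct (Lub_Rbar_correct (fun y => exists w, 1 <= w /\ y = Derive (Wf V) w)) as [_ Hl].
    exact Hl. }
  assert (HEw : forall w, 1 <= w -> Rbar_le (Finite (Derive (Wf V) w)) (supWp V)).
  { intros w0 Hw0'. unfold supWp. destruct (Lub_Rbar_correct (fun y => exists w, 1 <= w /\ y = Derive (Wf V) w)) as [Hu _].
    apply Hu. exists w0. split; [lra|reflexivity]. }
  destruct HCFL as [HC1 HC2].
  destruct (supWp V) as [Sw| |] eqn:ES.
  2:{ exfalso. fold lam in HC2. rewrite Rbar_mult_pinf_l in HC2 by exact Hlam. simpl in HC2. exact HC2. }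
  2:{ exfalso. simpl in HE1. exact HE1. }
  simpl in HC1, HC2. fold lam in HC1, HC2.
  assert (HS0 : 0 <= Sw).
  { apply Rnot_lt_le. intros HS. assert (lam * Sw < 0). 
    { rewrite <- (Rmult_0_r lam). apply Rmult_lt_compat_l; lra. } lra. }
  assert (HWg : Wgood (Wf V) Sw).
  { apply Wf_good; [exact HV_diff| exact HV_noninc| intros w0 Hw0'; exact (HEw w0 Hw0')]. }
  destruct Hy_bnd as [Mb HMb].
  assert (HL1 : Rbar_le (Finite (y0 0%Z)) (Lub_Rbar (fun y => exists j, y = y0 j))).
  { destruct (Lub_Rbar_correct (fun y => exists j, y = y0 j)) as [Hu _]. apply Hu. exists 0%Z; reflexivity. }
  assert (HL2 : Rbar_le (Lub_Rbar (fun y => exists j, y = y0 j)) (Finite Mb)).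
  { destruct (Lub_Rbar_correct (fun y => exists j, y = y0 j)) as [_ Hl]. apply Hl.
    intros y [j ->]. simpl. generalize (HMb j). intros H. apply Rabs_le_between in H. lra. }
  assert (HL3 : forall j, Rbar_le (Finite (y0 j)) (Lub_Rbar (fun y => exists j, y = y0 j))).
  { intros j. destruct (Lub_Rbar_correct (fun y => exists j, y = y0 j)) as [Hu _]. apply Hu. exists j; reflexivity. }
  assert (HG1 : Rbar_le (Glb_Rbar (fun y => exists j, y = y0 j)) (Finite (y0 0%Z))).
  { destruct (Glb_Rbar_correct (fun y => exists j, y = y0 j)) as [Hu _]. apply Hu. exists 0%Z; reflexivity. }
  assert (HG2 : Rbar_le (Finite 1) (Glb_Rbar (fun y => exists j, y = y0 j))).
  { destruct (Glb_Rbar_correct (fun y => exists j, y = y0 j)) as [_ Hl]. apply Hl.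
    intros y [j ->]. simpl. apply Hy_ge1. }
  assert (HG3 : forall j, Rbar_le (Glb_Rbar (fun y => exists j, y = y0 j)) (Finite (y0 j))).
  { intros j. destruct (Glb_Rbar_correct (fun y => exists j, y = y0 j)) as [Hu _]. apply Hu. exists j; reflexivity. }
  destruct (Lub_Rbar (fun y => exists j, y = y0 j)) as [M| |] eqn:EM; try (simpl in HL1; contradiction);
    try (simpl in HL2; contradiction).
  destruct (Glb_Rbar (fun y => exists j, y = y0 j)) as [m| |] eqn:Em; try (simpl in HG1; contradiction);
    try (simpl in HG2; contradiction).
  simpl in HG2, HG3, HL3.
  assert (Hy : forall j, m <= y0 j <= M) by (intros j; split; [apply HG3|apply HL3]).
  set (B := real (BV y0)).
  assert (HBy : forall lo k, zs (fun i => Rabs (y0 (i + 1)%Z - y0 i)) lo k <= B).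
  { intros lo k. unfold B, BV. apply zsum_win. intros; apply Rabs_pos. exact Hy_BV. }
  assert (HB0 : 0 <= B) by (eapply Rle_trans; [apply (zs_nonneg (fun i => Rabs (y0 (i + 1)%Z - y0 i)) 0%Z 0%nat); intros; apply Rabs_pos | apply (HBy 0%Z 0%nat)]).
  assert (EB : BV y0 = Finite B) by (unfold B; symmetry; exact Hy_BV).
  assert (HwS' : forall n i, w (Datatypes.S n) i = Tm lam p (Wf V) (w n) i).
  { intros n i. rewrite HwS, !Hconv. reflexivity. }
  assert (Inv : forall n, (forall j, m <= w n j <= M) /\
      (forall lo k, zs (fun i => Rabs (w n (i + 1)%Z - w n i)) lo k <= B)).
  { induction n as [|n [IH1 IH2]].
    - split.
      + intros j. rewrite Hw0, Hconv. apply conv_bounds; auto.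
        intros j'. destruct (Hy j'). repeat split; lra.
      + intros lo k.
        assert (HyB : forall j, Rabs (y0 j) <= M).
        { intros j. destruct (Hy j). rewrite Rabs_pos_eq; lra. }
        rewrite (zs_ext _ (fun i => Rabs (conv p (fun j => y0 (j + 1)%Z - y0 j) i))).
        apply conv_abs_win with (M + M); auto.
        intros j. eapply Rle_trans. apply Rabs_triang. rewrite Rabs_Ropp. generalize (HyB (j+1)%Z) (HyB j). lra.
        intros i. rewrite !Hw0, !Hconv. rewrite (conv_sub p y0 M i Kp HyB). reflexivity.
    - split.
      + intros j. rewrite HwS'. apply Tm_bounds with Sw; auto; lra.
      + intros lo k. rewrite (zs_ext _ (fun i => Rabs (Tm lam p (Wf V) (w n) (i + 1)%Z - Tm lam p (Wf V) (w n) i))).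
        apply Tm_TV with Sw m M; auto; lra.
        intros i. rewrite !HwS'. reflexivity. }
  intros n i. destruct (Inv n) as [I1 I2].
  split; [exact HG2|]. split; [simpl; apply I1|]. split; [simpl; apply I1|]. split.
  - rewrite EB. unfold BV. apply zsum_ub. intros; apply Rabs_pos. exact I2.
  - assert (HT : forall lo k, zs (fun i => Rabs (w (Datatypes.S n) i - w n i)) lo k <= lam * (Sw * B)).
    { intros lo k. rewrite (zs_ext _ (fun i => Rabs (Tm lam p (Wf V) (w n) i - w n i))).
      apply Tm_time with m M; auto; lra.
      intros i0. rewrite HwS'. reflexivity. }
    destruct (zsum_val _ _ (fun i => Rabs_pos _) HT) as [z [Ez Hz]].
    rewrite Ez, EB. simpl (Rbar_mult (Finite dz) (Finite z)).
    assert (Hdzz : dz * z <= dt * Sw * B).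
    { apply Rle_trans with (dz * (lam * (Sw * B))). apply Rmult_le_compat_l; lra.
      right. unfold lam. field. lra. }
    assert (HN1 : Rbar_le (Finite (Rabs (Derive (Wf V) 1))) (normWp V)).
    { unfold normWp. destruct (Lub_Rbar_correct (fun y => exists w, 1 <= w /\ y = Rabs (Derive (Wf V) w))) as [Hu _].
      apply Hu. exists 1. split; [lra|reflexivity]. }
    assert (HN2 : forall N, normWp V = Finite N -> Sw <= N).
    { intros N EN. assert (Hle : Rbar_le (Finite Sw) (Finite N)).
      { apply HEub. intros y [w0 [Hw0' ->]].
        assert (Hn : Rbar_le (Finite (Rabs (Derive (Wf V) w0))) (normWp V)).
        { unfold normWp. destruct (Lub_Rbar_correct (fun y => exists w, 1 <= w /\ y = Rabs (Derive (Wf V) w))) as [Hu _].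
          apply Hu. exists w0. split; [lra|reflexivity]. }
        rewrite EN in Hn. simpl in Hn. simpl. generalize (Rle_abs (Derive (Wf V) w0)). lra. }
      exact Hle. }
    destruct (normWp V) as [N| |] eqn:EN.
    + simpl. specialize (HN2 N eq_refl).
      apply Rle_trans with (dt * Sw * B); auto.
      apply Rmult_le_compat_r; auto. apply Rmult_le_compat_l; lra.
    + rewrite Rbar_mult_pinf_l by lra.
      destruct (Rle_lt_or_eq_dec 0 B HB0) as [HBp|HBz].
      * rewrite Rbar_mult_pinf_r by lra. simpl. exact I.
      * rewrite <- HBz. rewrite Rbar_mult_pinf_0. simpl. rewrite <- HBz in Hdzz. lra.
    + simpl in HN1. contradiction.
Qed.
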